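(* Let $j,\ell\in[m]$ be distinct, $r_j,r_\ell\in[0,1]$, and let $\mathbf{x}=(\mathbf{x}_1,\dots,\mathbf{x}_n)$ and $\mathbf{y}=(\mathbf{y}_1,\dots,\mathbf{y}_n)$ be Generalized Nash equilibria of $G^{(2)}$ with $\mathbf{x}_T^{(j)}=\mathbf{y}_T^{(j)}=r_j$ and $\mathbf{x}_T^{(\ell)}=\mathbf{y}_T^{(\ell)}=r_\ell$. If for some $i\in[n]$ it holds $0<x_{ij}<y_{ij}$ and $x_{i\ell}>y_{i\ell}>0$, then $\mathbf{x}_i$ is of Type I or $\mathbf{y}_i$ is of Type I.
   Context: $G^{(2)}$ is a Fragile multi-CPR Game with $n\ge1$ players and $m\ge1$ CPRs: $[k]=\{1,\dots,k\}$, $C_m=\{(x_1,\dots,x_m)\in[0,1]^m:\sum_j x_j\le1\}$, $\mathcal{C}_n=\prod_{i\in[n]}C_m$, $\mathcal{C}_{-i}=\prod_{[n]\setminus\{i\}}C_m$. A profile is $\mathbf{x}=(\mathbf{x}_1,\dots,\mathbf{x}_n)$, $\mathbf{x}_i=(x_{i1},\dots,x_{im})$; write $\mathbf{x}=(\mathbf{x}_i,\mathbf{x}_{-i})$; $\mathbf{x}_T^{(j)}=\sum_i x_{ij}$, $\mathbf{x}_T^{j|i}=\sum_{\ell'\ne i}x_{\ell' j}$. Each CPR $j$ has return rate $\mathcal{R}_j(t)>1$ and failure probability $p_j(t)\in[0,1]$; each player $i$ has parameters $a_i,k_i$. $\mathcal{F}_{ij}(t)=(\mathcal{R}_j(t)-1)^{a_i}(1-p_j(t))-k_ip_j(t)$;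 utility $\mathcal{V}_i(\mathbf{x}_i;\mathbf{x}_{-i})=\sum_j x_{ij}^{a_i}\mathcal{F}_{ij}(\mathbf{x}_T^{(j)})$. Assumption: (1) $p_j(0)=0$, $p_j(t)=1$ for $t\ge1$; (2) $a_i\in(0,1]$, $k_i>0$; (3) each $\mathcal{F}_{ij}$ (continuous on $[0,1]$) has strictly negative first and second derivatives on $(0,1)$. $\omega_{ij}\in(0,1)$ is the unique zero of $\mathcal{F}_{ij}$ in $(0,1)$. $A(\mathbf{x}_{-i})=\{j:\mathbf{x}_T^{j|i}<\omega_{ij}\}$. $\vartheta_i(\mathbf{x}_{-i})=C_m\cap\big(\prod_{j\in A(\mathbf{x}_{-i})}[0,\omega_{ij}-\mathbf{x}_T^{j|i}]\times\prod_{j\notin A(\mathbf{x}_{-i})}\{0\}\big)$. A Generalized Nash equilibrium is $\mathbf{x}\in\mathcal{C}_n$ with, for all $i$, $\mathbf{x}_i\in\vartheta_i(\mathbf{x}_{-i})$ and $\mathcal{V}_i(\mathbf{x}_i;\mathbf{x}_{-i})\ge\mathcal{V}_i(\mathbf{z};\mathbf{x}_{-i})$ for all $\mathbf{z}\in\vartheta_i(\mathbf{x}_{-i})$. $\psi_{ij}(x;s)=x\,\mathcal{F}_{ij}'(x+s)+a_i\mathcal{F}_{ij}(x+s)$. For a GNE $\mathbf{x}$: $J_{\mathbf{x}_{-i}}=\{j\in A(\mathbf{x}_{-i}):x_{ij}\ne0\}$; $\mathbf{x}_i$ is of Type I if $\sum_{j\in J_{\mathbf{x}_{-i}}}x_{ij}<1$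 and $\psi_{ij}(x_{ij};\mathbf{x}_T^{j|i})=0$ for all $j\in J_{\mathbf{x}_{-i}}$; of Type II if $\sum_{j\in J_{\mathbf{x}_{-i}}}x_{ij}=1$ and there is $\kappa_0\ge0$ with $x_{ij}^{a_i-1}\psi_{ij}(x_{ij};\mathbf{x}_T^{j|i})=\kappa_0$ for all $j\in J_{\mathbf{x}_{-i}}$. *)

(* Defs.v *)
From HB Require Import structures.
From mathcomp Require Import all_boot all_order all_algebra.
From mathcomp Require Import all_classical all_reals all_analysis.
Set Implicit Arguments. Unset Strict Implicit. Unset Printing Implicit Defensive.
Import Order.TTheory GRing.Theory Num.Theory.
Import numFieldNormedType.Exports.
Local Open Scope classical_set_scope.
Local Open Scope ring_scope.

(* A Fragile multi-CPR game G^(2) with n players ('I_n) and m CPRs ('I_m). *)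
Record cpr_game (R : realType) (n m : nat) := CprGame {
  Ret : 'I_m -> R -> R;
  pfail : 'I_m -> R -> R;
  ai : 'I_n -> R;
  ki : 'I_n -> R;
  omega : 'I_n -> 'I_m -> R      (* omega_ij, the zero of F_ij in (0,1) *)
}.

Section Game.
Context {R : realType} {n m : nat} (G : cpr_game R n m).

Definition Fij (i : 'I_n) (j : 'I_m) (t : R) : R :=
  ((Ret G j t - 1) `^ (ai G i)) * (1 - pfail G j t) - ki G i * pfail G j t.

(* Standing assumptions of the paper. omega_ij is recorded as a zero of F_ij
   in (0,1); under (3) it is the unique one. *)
Definition game_assumptions : Prop :=
  (forall j t, 0 <= t -> 1 < Ret G j t) /\
  (forall j t, 0 <= t -> 0 <= pfail G j t <= 1) /\
  (forall j, pfail G j 0 = 0) /\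
  (forall j t, 1 <= t -> pfail G j t = 1) /\
  (forall i, 0 < ai G i <= 1) /\
  (forall i, 0 < ki G i) /\
  (forall i j, {within `[0, 1], continuous (Fij i j)}) /\
  (forall i j t, 0 < t < 1 ->
     [/\ derivable (Fij i j) t 1, derive1 (Fij i j) t < 0,
         derivable (derive1 (Fij i j)) t 1 & derive1 (derive1 (Fij i j)) t < 0]) /\
  (forall i j, 0 < omega G i j < 1 /\ Fij i j (omega G i j) = 0).

Definition in_Cm (v : 'I_m -> R) : Prop :=
  (forall j, 0 <= v j <= 1) /\ \sum_(j < m) v j <= 1.

Definition in_Cn (x : 'I_n -> 'I_m -> R) : Prop := forall i, in_Cm (x i).

Definition totalT (x : 'I_n -> 'I_m -> R) (j : 'I_m) : R := \sum_(i < n) x i j.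

Definition total_except (x : 'I_n -> 'I_m -> R) (i : 'I_n) (j : 'I_m) : R :=
  \sum_(l < n | l != i) x l j.

Definition inA (x : 'I_n -> 'I_m -> R) (i : 'I_n) (j : 'I_m) : Prop :=
  total_except x i j < omega G i j.

Definition in_theta (x : 'I_n -> 'I_m -> R) (i : 'I_n) (z : 'I_m -> R) : Prop :=
  in_Cm z /\
  forall j, (inA x i j -> 0 <= z j <= omega G i j - total_except x i j) /\
            (~ inA x i j -> z j = 0).

Definition Vi (i : 'I_n) (z : 'I_m -> R) (x : 'I_n -> 'I_m -> R) : R :=
  \sum_(j < m) (z j `^ (ai G i)) * Fij i j (z j + total_except x i j).

Definition is_GNE (x : 'I_n -> 'I_m -> R) : Prop :=
  in_Cn x /\
  forall i, in_theta x i (x i) /\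
            forall z, in_theta x i z -> Vi i z x <= Vi i (x i) x.

Definition psi (i : 'I_n) (j : 'I_m) (xx s : R) : R :=
  xx * derive1 (Fij i j) (xx + s) + ai G i * Fij i j (xx + s).

Definition inJ (x : 'I_n -> 'I_m -> R) (i : 'I_n) (j : 'I_m) : Prop :=
  inA x i j /\ x i j != 0.

Definition sumJ (x : 'I_n -> 'I_m -> R) (i : 'I_n) : R :=
  \sum_(j < m | `[< inJ x i j >]) x i j.

Definition typeI (x : 'I_n -> 'I_m -> R) (i : 'I_n) : Prop :=
  sumJ x i < 1 /\
  forall j, inJ x i j -> psi i j (x i j) (total_except x i j) = 0.

Definition typeII (x : 'I_n -> 'I_m -> R) (i : 'I_n) : Prop :=
  sumJ x i = 1 /\
  exists kappa0 : R, 0 <= kappa0 /\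
    forall j, inJ x i j ->
      (x i j `^ (ai G i - 1)) * psi i j (x i j) (total_except x i j) = kappa0.

End Game.

(* Main.v *)
Require Import Defs.
From HB Require Import structures.
From mathcomp Require Import all_boot all_order all_algebra.
From mathcomp Require Import all_classical all_reals all_analysis.
From mathcomp Require Import lra.
Import Order.TTheory GRing.Theory Num.Theory.
Import numFieldNormedType.Exports.
Local Open Scope ring_scope.

Section Aux.
Context {R : realType}.

Definition upd1 {m} (w : 'I_m -> R) (j : 'I_m) (u : R) k :=
  if k == j then u else w k.

Lemma sum_upd1 {m} (f : 'I_m -> R -> R) (w : 'I_m -> R) j u :
  \sum_(k < m) f k (upd1 w j u k) =
  \sum_(k < m) f k (w k) + (f j u - f j (w j)).
Proof.
rewrite (bigD1 j) //= [in RHS](bigD1 j) //= /upd1 eqxx.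
rewrite (eq_bigr (fun k => f k (w k))); last by move=> k /negbTE ->.
lra.
Qed.

Lemma is_derive_aff (g : R -> R) (k c d e0 : R) :
  is_derive (k * e0 + c) 1 g d ->
  is_derive e0 1 (fun e => g (k * e + c)) (k * d).
Proof.
move=> hg.
have hf : is_derive e0 1 (fun e : R => k * e + c) k.
  have := is_deriveD (is_deriveZ k (@is_derive_id _ _ e0 1)) (@is_derive_cst _ _ _ c e0 1).
  rewrite addr0 => H.
  apply: (is_derive_eq H); exact: mulr1.
have df : derivable (fun e : R => k * e + c) e0 1 by case: hf.
have dg : derivable g (k * e0 + c) 1 by case: hg.
apply: DeriveDef.
  apply/derivable1_diffP.
  apply: (differentiable_comp (f := fun e : R => k * e + c) (g := g)).
    exact/derivable1_diffP.
  exact/derivable1_diffP.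
rewrite -derive1E.
have -> : (fun e => g (k * e + c)) = g \o (fun e : R => k * e + c) by [].
rewrite derive1_comp // !derive1E !derive_val mulrC.
by [].
Qed.

Lemma dphi (g1 g2 : R -> R) (a xj xl rj rl e : R) :
  0 < 1 * e + xj -> 0 < -1 * e + xl ->
  derivable g1 (1 * e + rj) 1 -> derivable g2 (-1 * e + rl) 1 ->
  is_derive e 1 (fun e => (1 * e + xj) `^ a * g1 (1 * e + rj) + (-1 * e + xl) `^ a * g2 (-1 * e + rl))
   ((1 * e + xj) `^ a * (1 * derive1 g1 (1 * e + rj)) + g1 (1 * e + rj) * (1 * (a * (1 * e + xj) `^ (a - 1)))
  + ((-1 * e + xl) `^ a * (-1 * derive1 g2 (-1 * e + rl)) + g2 (-1 * e + rl) * (-1 * (a * (-1 * e + xl) `^ (a - 1))))).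
Proof.
move=> h1 h2 d1 d2.
have p1 := is_derive_aff _ 1 xj _ e (is_derive1_powR a h1).
have p2 := is_derive_aff _ (-1) xl _ e (is_derive1_powR a h2).
have q1 := is_derive_aff _ 1 rj _ e (derivableP d1).
have q2 := is_derive_aff _ (-1) rl _ e (derivableP d2).
have H := is_deriveD (is_deriveM p1 q1) (is_deriveM p2 q2).
apply: (is_derive_eq H).
by rewrite !derive1E.
Qed.
End Aux.
Section Game.
Variables (R : realType) (n m : nat) (G : cpr_game R n m).
Hypothesis HG : game_assumptions G.
Implicit Types (x : 'I_n -> 'I_m -> R) (i : 'I_n) (k j l : 'I_m) (w z : 'I_m -> R).

Lemma Fdecr i k s t : 0 <= s -> s < t -> t <= 1 -> Fij G i k t < Fij G i k s.
Proof.
case: HG => _ [_ [_ [_ [_ [_ [hc [hd _]]]]]]].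
apply: (@ltr0_derive1_decr _ _ 0 1) => //.
- by move=> z; rewrite in_itv /= => hz; case: (hd i k z hz).
- by move=> z; rewrite in_itv /= => hz; case: (hd i k z hz).
Qed.

Lemma om i k : 0 < omega G i k < 1 /\ Fij G i k (omega G i k) = 0.
Proof. by case: HG => _ [_ [_ [_ [_ [_ [_ [_ h]]]]]]]. Qed.

Lemma aiP i : 0 < ai G i <= 1.
Proof. by case: HG => _ [_ [_ [_ [h _]]]]. Qed.

Lemma dF i k t : 0 < t < 1 -> derivable (Fij G i k) t 1 /\ derive1 (Fij G i k) t < 0.
Proof. by case: HG => _ [_ [_ [_ [_ [_ [_ [hd _]]]]]]] /(hd i k) []. Qed.

Lemma Fpos i k t : 0 <= t -> t < omega G i k -> 0 < Fij G i k t.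
Proof.
move=> h0 h1; have [/andP[_ o1] Fo] := om i k.
by rewrite -Fo; apply: Fdecr => //; apply: ltW.
Qed.

Lemma te_ge0 x i k : in_Cn x -> 0 <= total_except x i k.
Proof. by move=> hx; apply: sumr_ge0 => l _; case: (hx l) => /(_ k) /andP[]. Qed.

Lemma totE x i k : totalT x k = x i k + total_except x i k.
Proof. by rewrite /totalT /total_except (bigD1 i). Qed.

Lemma posA x i k : is_GNE G x -> 0 < x i k ->
  inA G x i k /\ x i k <= omega G i k - total_except x i k.
Proof.
case=> _ /(_ i) [[_ /(_ k) [h1 h2]] _] hpos.
have [hA|hA] := pselect (inA G x i k); last by move: hpos; rewrite (h2 hA) ltxx.
by split => //; case/andP: (h1 hA).
Qed.

Lemma theta_of x i z : is_GNE G x ->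
  (forall k, z k != x i k -> inA G x i k /\ 0 <= z k <= omega G i k - total_except x i k) ->
  \sum_(k < m) z k <= \sum_(k < m) x i k -> in_theta G x i z.
Proof.
move=> hx hz hs; have hC := hx.1; have [[hCi hth] _] := hx.2 i.
split; [split|].
- move=> k; case: (eqVneq (z k) (x i k)) => [->|/hz [hA /andP[h0 h1]]].
    by case: (hC i) => /(_ k).
  apply/andP; split => //; apply: (le_trans h1).
  have [/andP[_ o1] _] := om i k; have := te_ge0 x i k hC; lra.
- exact: le_trans hs hCi.2.
- move=> k; case: (eqVneq (z k) (x i k)) => [->|/hz [hA hb]]; first exact: hth.
  by split.
Qed.

Lemma Vi_upd1 x i w k u : Vi G i (upd1 w k u) x = Vi G i w x +
  (u `^ ai G i * Fij G i k (u + total_except x i k)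
   - w k `^ ai G i * Fij G i k (w k + total_except x i k)).
Proof. exact: (sum_upd1 (fun k t => t `^ ai G i * Fij G i k (t + total_except x i k))). Qed.

Lemma rlt x i k : is_GNE G x -> 0 < x i k -> totalT x k < omega G i k.
Proof.
move=> hx hp; have [hA hle] := posA x i k hx hp.
have hte := te_ge0 x i k hx.1.
rewrite (totE x i) lt_neqAle.
have -> : x i k + total_except x i k <= omega G i k by lra.
rewrite andbT; apply/negP => /eqP he.
pose z := upd1 (x i) k (x i k / 2).
have hth : in_theta G x i z.
  apply: theta_of => //.
  - move=> k'; rewrite /z /upd1; case: (eqVneq k' k) => [->|hne]; last by rewrite eqxx.
    move=> _; split => //; apply/andP; split; lra.
  - rewrite (sum_upd1 (fun _ t => t)) /=. lra.
have := (hx.2 i).2 z hth; rewrite /z Vi_upd1 he (om i k).2 mulr0.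
have : 0 < (x i k / 2) `^ ai G i * Fij G i k (x i k / 2 + total_except x i k).
  apply: mulr_gt0; first by apply: powR_gt0; lra.
  apply: Fpos; lra.
lra.
Qed.


Definition K x i k t := t `^ ai G i * derive1 (Fij G i k) (totalT x k)
   + Fij G i k (totalT x k) * (ai G i * t `^ (ai G i - 1)).

Lemma Kdecr i k (r s t : R) : 0 < r < 1 -> r < omega G i k -> 0 < s -> s < t ->
  t `^ ai G i * derive1 (Fij G i k) r + Fij G i k r * (ai G i * t `^ (ai G i - 1)) <
  s `^ ai G i * derive1 (Fij G i k) r + Fij G i k r * (ai G i * s `^ (ai G i - 1)).
Proof.
move=> hr hro hs hst.
have [a0 a1] := andP (aiP i).
have hD := (dF i k r hr).2.
have hF : 0 <= Fij G i k r by apply/ltW/Fpos => //; case/andP: hr => /ltW.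
have ht : 0 < t by apply: lt_trans hst.
have p1 : s `^ ai G i < t `^ ai G i.
  by apply: gt0_ltr_powR => //; rewrite nnegrE ltW.
have p2 : t `^ (ai G i - 1) <= s `^ (ai G i - 1).
  rewrite -(opprB 1 (ai G i)) !powRN lef_pV2 ?posrE ?powR_gt0 //.
  by apply: ge0_ler_powR; rewrite ?nnegrE ?subr_ge0 // ltW.
apply: ltr_leD; first by rewrite ltr_nM2r.
by apply: ler_wpM2l => //; apply: ler_wpM2l => //; apply: ltW.
Qed.


Lemma foc x i j l : is_GNE G x -> j != l -> 0 < x i j -> 0 < x i l ->
  K x i j (x i j) = K x i l (x i l).
Proof.
move=> hx hjl hpj hpl.
have hrj := rlt x i j hx hpj; have hrl := rlt x i l hx hpl.
have [hAj _] := posA x i j hx hpj; have [hAl _] := posA x i l hx hpl.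
have tj := te_ge0 x i j hx.1; have tl := te_ge0 x i l hx.1.
have Ej := totE x i j; have El := totE x i l.
have [/andP[_ oj] _] := om i j; have [/andP[_ ol] _] := om i l.
rewrite /K.
set xj := x i j in hpj Ej *; set xl := x i l in hpl El *.
set sj := total_except x i j in tj Ej *; set sl := total_except x i l in tl El *.
set rj := totalT x j in hrj Ej *; set rl := totalT x l in hrl El *.
set wj := omega G i j in hrj oj *; set wl := omega G i l in hrl ol *.
pose d : R := Num.min (Num.min xj xl) (Num.min (wj - rj) (wl - rl)).
have d0 : 0 < d by rewrite !lt_min hpj hpl !subr_gt0 hrj hrl.
have [d1 d2] : d <= xj /\ d <= xl by rewrite !ge_min !le_refl !orbT.
have [d3 d4] : d <= wj - rj /\ d <= wl - rl by rewrite !ge_min !le_refl !orbT.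
clearbody d.
pose phi := fun e => (1 * e + xj) `^ ai G i * Fij G i j (1 * e + rj)
  + (-1 * e + xl) `^ ai G i * Fij G i l (-1 * e + rl).
have der : forall e : R, -d < e < d -> is_derive e 1 phi
   ((1 * e + xj) `^ ai G i * (1 * derive1 (Fij G i j) (1 * e + rj)) + Fij G i j (1 * e + rj) * (1 * (ai G i * (1 * e + xj) `^ (ai G i - 1)))
  + ((-1 * e + xl) `^ ai G i * (-1 * derive1 (Fij G i l) (-1 * e + rl)) + Fij G i l (-1 * e + rl) * (-1 * (ai G i * (-1 * e + xl) `^ (ai G i - 1))))).
  move=> e /andP[he1 he2]; apply: dphi; [lra|lra| |].
    by apply: (dF i j _ _).1; apply/andP; split; lra.
  by apply: (dF i l _ _).1; apply/andP; split; lra.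
have mx : forall e : R, e \in `]-d, d[ -> phi e <= phi 0.
  move=> e; rewrite in_itv /= => /andP[he1 he2].
  have {he1}he1 : -d < e := he1; have {he2}he2 : e < d := he2.
  pose W := upd1 (x i) j (xj + e).
  pose z := upd1 W l (xl - e).
  have Wl : W l = xl by rewrite /W /upd1 eq_sym (negbTE hjl).
  have Wj : W j = xj + e by rewrite /W /upd1 eqxx.
  have zj : z j = xj + e by rewrite /z /upd1 (negbTE hjl).
  have zl : z l = xl - e by rewrite /z /upd1 eqxx.
  have zk : forall k, k != j -> k != l -> z k = x i k.
    by move=> k hkj hkl; rewrite /z /W /upd1 (negbTE hkj) (negbTE hkl).
  have hth : in_theta G x i z.
    apply: theta_of => //.
    - move=> k; case: (eqVneq k j) => [->|hkj].
        by rewrite zj -/wj -/sj => _; split => //; apply/andP; split; lra.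
      case: (eqVneq k l) => [->|hkl].
        by rewrite zl -/wl -/sl => _; split => //; apply/andP; split; lra.
      by rewrite zk // eqxx.
    - rewrite /z (sum_upd1 (fun _ t => t)) /= /W (sum_upd1 (fun _ t => t)) /=.
      rewrite -/W Wl -/xj -/xl; lra.
  have := (hx.2 i).2 z hth; rewrite /z Vi_upd1 /W Vi_upd1 -/W Wl.
  have e1 : xj + e + sj = 1 * e + rj by lra.
  have e2 : xj + e = 1 * e + xj by lra.
  have e3 : xl - e + sl = -1 * e + rl by lra.
  have e4 : xl - e = -1 * e + xl by lra.
  rewrite e1 e2 e3 e4 -/xj -/xl -Ej -El /phi !mulr0 !add0r.
  lra.
have hab : -d <= d by lra.
have hdv : forall t, t \in `]-d, d[ -> derivable phi t 1.
  move=> t; rewrite in_itv /= => ht; by case: (der t ht).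
have h0 : (0:R) \in `]-d, d[ by rewrite in_itv /=; apply/andP; split; lra.
have hd0 := @derive1_at_max R phi (-d) d 0 hab hdv h0 mx.
have H0 := der 0 ltac:(apply/andP; split; lra).
case: hd0 => _ E1; case: H0 => _ E2.
move: E2; rewrite E1 !mulr0 !add0r.
lra.
Qed.

End Game.


Theorem lemma12 (R : realType) (n m : nat) (G : cpr_game R n m)
  (HG : game_assumptions G)
  (j l : 'I_m) (hjl : j != l) (rj rl : R)
  (hrj : 0 <= rj <= 1) (hrl : 0 <= rl <= 1)
  (x y : 'I_n -> 'I_m -> R)
  (hx : is_GNE G x) (hy : is_GNE G y)
  (hxj : totalT x j = rj) (hyj : totalT y j = rj)
  (hxl : totalT x l = rl) (hyl : totalT y l = rl)
  (i : 'I_n)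
  (hij : 0 < x i j < y i j) (hil : 0 < y i l < x i l) :
  typeI G x i \/ typeI G y i.
Proof.
exfalso.
have [hxj0 hxyj] := andP hij; have [hyl0 hyxl] := andP hil.
have hyj0 : 0 < y i j by apply: lt_trans hxyj.
have hxl0 : 0 < x i l by apply: lt_trans hyxl.
have Kx := @foc R n m G HG x i j l hx hjl hxj0 hxl0.
have Ky := @foc R n m G HG y i j l hy hjl hyj0 hyl0.
move: Kx Ky; rewrite /K hxj hyj hxl hyl => Kx Ky.
have rj1 := @rlt R n m G HG x i j hx hxj0; rewrite hxj in rj1.
have rl1 := @rlt R n m G HG x i l hx hxl0; rewrite hxl in rl1.
have [/andP[_ oj] _] := @om R n m G HG i j.
have [/andP[_ ol] _] := @om R n m G HG i l.
have rj0 : 0 < rj.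
  rewrite -hxj (totE _ _ _ x i j); have := te_ge0 _ _ _ x i j hx.1; lra.
have rl0 : 0 < rl.
  rewrite -hxl (totE _ _ _ x i l); have := te_ge0 _ _ _ x i l hx.1; lra.
have M1 := @Kdecr R n m G HG i j rj (x i j) (y i j)
  ltac:(apply/andP; split; lra) rj1 hxj0 hxyj.
have M2 := @Kdecr R n m G HG i l rl (y i l) (x i l)
  ltac:(apply/andP; split; lra) rl1 hyl0 hyxl.
lra.
Qed.
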